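(* Near linear Zarankiewicz bounds are preserved under local trace definability: if a structure $\mathcal{N}$ has near linear Zarankiewicz bounds and $\mathcal{N}$ locally trace defines a structure $\mathcal{M}$, then $\mathcal{M}$ has near linear Zarankiewicz bounds.
   Context: ''Definable'' means with parameters. $\mathcal{N}$ locally trace defines $\mathcal{M}$ if there is a possibly infinite collection $\mathcal{E}$ of functions $M\to N$ such that every $\mathcal{M}$-definable subset of every $M^m$ is of the form $\{(a_1,\dots,a_m) : (f_1(a_{i_1}),\dots,f_n(a_{i_n}))\in Y\}$ for some $f_1,\dots,f_n\in\mathcal{E}$, $i_1,\dots,i_n\in\{1,\dots,m\}$ and $\mathcal{N}$-definable $Y\subseteq N^n$. A bipartite graph with sorts $V,W$ and edges $E\subseteq V\times W$ is $K_{m,n}$-free if it contains no complete bipartite subgraph with parts of size $m,n$. A class $\mathcal{C}$ of finite bipartite graphs has near linear Zarankiewicz bounds if for every $m$ and real $\varepsilon>0$ there is real $\lambda>0$ with every $K_{m,m}$-free $\mathcal{G}\in\mathcal{C}$ having at most $\lambda|\mathcal{G}|^{1+\varepsilon}$ edges ($|\mathcal{G}|$ the number of vertices). A bipartite graph has near linear Zarankiewicz bounds if the class of its finite substructures does, and a structure has them if every bipartite graph definable in it does (equivalently, this holds in every model of its theory). *)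

(* Defs.v *)
From Stdlib Require Import Reals.
From mathcomp Require Import all_boot.

Set Implicit Arguments.
Unset Strict Implicit.
Unset Printing Implicit Defensive.

Record structure := Structure {
  carrier : Type;
  Fn : Type;
  fn_ar : Fn -> nat;
  fnI : forall f : Fn, ('I_(fn_ar f) -> carrier) -> carrier;
  Rl : Type;
  rl_ar : Rl -> nat;
  rlI : forall r : Rl, ('I_(rl_ar r) -> carrier) -> Prop
}.

Inductive term (S : structure) : Type :=
  | Var : nat -> term S
  | App : forall f : Fn S, ('I_(fn_ar f) -> term S) -> term S.

Fixpoint eval_term (S : structure) (env : nat -> carrier S) (t : term S)
  : carrier S :=
  match t with
  | Var n => env n
  | App f ts => @fnI S f (fun i => eval_term env (ts i))
  end.

(* first-order formulas; [FEx] binds variable 0 (de Bruijn) *)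
Inductive formula (S : structure) : Type :=
  | FEq : term S -> term S -> formula S
  | FRel : forall r : Rl S, ('I_(rl_ar r) -> term S) -> formula S
  | FFalse : formula S
  | FNot : formula S -> formula S
  | FAnd : formula S -> formula S -> formula S
  | FEx : formula S -> formula S.

Definition scons (T : Type) (x : T) (env : nat -> T) : nat -> T :=
  fun n => match n with 0 => x | n'.+1 => env n' end.

Fixpoint sat (S : structure) (env : nat -> carrier S) (phi : formula S)
  : Prop :=
  match phi with
  | FEq t u => eval_term env t = eval_term env u
  | FRel r ts => @rlI S r (fun i => eval_term env (ts i))
  | FFalse => False
  | FNot p => ~ sat env p
  | FAnd p q => sat env p /\ sat env q
  | FEx p => exists x, sat (scons x env) p
  end.

(* environment: variables 0..m-1 get the tuple a, variables >= m get
   parameters p *)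
Definition tenv (S : structure) (m : nat) (a : 'I_m -> carrier S)
  (p : nat -> carrier S) : nat -> carrier S :=
  fun n => match ltnP n m with
           | LtnNotGeq h => a (Ordinal h)
           | GeqNotLtn _ => p n
           end.

Definition definable (S : structure) (m : nat)
  (X : ('I_m -> carrier S) -> Prop) : Prop :=
  exists (phi : formula S) (p : nat -> carrier S),
    forall a : 'I_m -> carrier S, X a <-> sat (tenv a p) phi.

Definition locally_trace_defines (N M : structure) : Prop :=
  exists Ecol : (carrier M -> carrier N) -> Prop,
    forall (m : nat) (X : ('I_m -> carrier M) -> Prop),
      definable X ->
      exists (n : nat) (fs : 'I_n -> carrier M -> carrier N)
             (idx : 'I_n -> 'I_m) (Y : ('I_n -> carrier N) -> Prop),
        (forall j, Ecol (fs j)) /\ definable Y /\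
        forall a : 'I_m -> carrier M,
          X a <-> Y (fun j => fs j (a (idx j))).

Definition bgraph_class := forall (V W : finType), (V -> W -> bool) -> Prop.

Definition Kfree (V W : finType) (E : V -> W -> bool) (m n : nat) : Prop :=
  ~ exists (A : {set V}) (B : {set W}),
      #|A| = m /\ #|B| = n /\ forall a b, a \in A -> b \in B -> E a b.

Definition nedges (V W : finType) (E : V -> W -> bool) : nat :=
  #|[set p : V * W | E p.1 p.2]|.

Definition near_linear_class (C : bgraph_class) : Prop :=
  forall (m : nat) (eps : R), Rlt 0 eps ->
    exists lam : R, Rlt 0 lam /\
      forall (V W : finType) (E : V -> W -> bool),
        C V W E -> Kfree E m m ->
        Rle (INR (nedges E)) (Rmult lam (Rpower (INR (#|V| + #|W|)) (Rplus 1 eps))).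

Definition tjoin (T : Type) (k l : nat) (a : 'I_k -> T) (b : 'I_l -> T)
  : 'I_(k + l) -> T :=
  fun i => match split i with inl j => a j | inr j => b j end.

(* a bipartite graph definable in S: V subset of M^k, W subset of M^l,
   E subset of V x W (as a subset of M^(k+l)), all definable *)
Record def_bgraph (S : structure) := DefBGraph {
  dk : nat;
  dl : nat;
  dV : ('I_dk -> carrier S) -> Prop;
  dW : ('I_dl -> carrier S) -> Prop;
  dE : ('I_(dk + dl) -> carrier S) -> Prop;
  dV_def : definable dV;
  dW_def : definable dW;
  dE_def : definable dE;
  dE_sub : forall a b, dE (tjoin a b) -> dV a /\ dW b
}.

(* the class of finite substructures (finite induced subgraphs) of G,
   up to isomorphism *)
Definition finite_substructures (S : structure) (G : def_bgraph S)
  : bgraph_class :=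
  fun V W E =>
    exists (f : V -> 'I_(dk G) -> carrier S) (g : W -> 'I_(dl G) -> carrier S),
      injective f /\ injective g /\
      (forall v, @dV S G (f v)) /\ (forall w, @dW S G (g w)) /\
      (forall v w, E v w <-> @dE S G (tjoin (f v) (g w))).

Definition bgraph_near_linear (S : structure) (G : def_bgraph S) : Prop :=
  near_linear_class (finite_substructures G).

Definition near_linear_Zarankiewicz (S : structure) : Prop :=
  forall G : def_bgraph S, bgraph_near_linear G.

(* Main.v *)
Require Import Defs.
From Stdlib Require Import Reals.
From mathcomp Require Import all_boot.
From Stdlib Require Import FunctionalExtensionality.

Set Implicit Arguments.
Unset Strict Implicit.
Unset Printing Implicit Defensive.

Fixpoint trename (S : structure) (rho : nat -> nat) (t : term S) : term S :=
  match t with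
  | Var v => Var S (rho v)
  | App f ts => App (fun i => trename rho (ts i))
  end.

Definition upr (rho : nat -> nat) : nat -> nat :=
  fun v => match v with 0 => 0 | v'.+1 => (rho v').+1 end.

Fixpoint frename (S : structure) (rho : nat -> nat) (phi : formula S) : formula S :=
  match phi with
  | FEq t u => FEq (trename rho t) (trename rho u)
  | FRel r ts => FRel (fun i => trename rho (ts i))
  | FFalse => FFalse S
  | FNot p => FNot (frename rho p)
  | FAnd p q => FAnd (frename rho p) (frename rho q)
  | FEx p => FEx (frename (upr rho) p)
  end.

Lemma eval_trename (S : structure) (t : term S) : forall rho env,
  eval_term env (trename rho t) = eval_term (fun v => env (rho v)) t.
Proof.
elim: t => [v|f ts IH] rho env //=.
congr fnI; apply: functional_extensionality => i; exact: IH.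
Qed.

Lemma sat_frename (S : structure) (phi : formula S) : forall rho env,
  sat env (frename rho phi) <-> sat (fun v => env (rho v)) phi.
Proof.
elim: phi => [t u|r ts| |p IH|p IHp q IHq|p IH] rho env /=.
- by rewrite !eval_trename.
- have -> : (fun i => eval_term env (trename rho (ts i))) =
            (fun i => eval_term (fun v => env (rho v)) (ts i)).
    by apply: functional_extensionality => i; rewrite eval_trename.
  by [].
- by [].
- by rewrite IH.
- by rewrite IHp IHq.
- split => -[x Hx]; exists x; move: Hx; rewrite IH;
  (have -> : (fun v => scons x env (upr rho v)) = scons x (fun v => env (rho v))
    by apply: functional_extensionality => -[|v]); by [].
Qed.

Lemma tenv_lt (S : structure) m (a : 'I_m -> carrier S) p i (h : i < m) :
  tenv a p i = a (Ordinal h).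
Proof.
rewrite /tenv; case: ltnP => h'; first by congr a; apply: val_inj.
by exfalso; move: h'; rewrite leqNgt h.
Qed.

Lemma tenv_ge (S : structure) m (a : 'I_m -> carrier S) p i :
  m <= i -> tenv a p i = p i.
Proof.
rewrite /tenv; case: ltnP => h' //; by rewrite leqNgt h'.
Qed.

Lemma definable_comp (S : structure) n m (sigma : 'I_n -> 'I_m)
  (Y : ('I_n -> carrier S) -> Prop) :
  definable Y -> definable (fun z : 'I_m -> carrier S => Y (fun j => z (sigma j))).
Proof.
move=> [phi [p Hp]].
pose rho := fun v => match ltnP v n with
                     | LtnNotGeq h => nat_of_ord (sigma (Ordinal h))
                     | GeqNotLtn _ => v - n + m end.
exists (frename rho phi), (fun v => p (v - m + n)) => z.
rewrite Hp sat_frename.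
have -> : (fun v => tenv z (fun v0 => p (v0 - m + n)) (rho v)) =
          tenv (fun j => z (sigma j)) p; last by [].
apply: functional_extensionality => v; rewrite /rho.
case: ltnP => h.
  by rewrite (tenv_lt _ _ h) (tenv_lt _ _ (ltn_ord (sigma (Ordinal h)))); congr z; apply: val_inj.
rewrite tenv_ge ?tenv_ge //; last by rewrite leq_addl.
by congr p; rewrite addnK subnK.
Qed.
Definition encode (A B : Type) (r k : nat) (G : 'I_r -> A -> B) (a : 'I_k -> A)
  : 'I_#|{: 'I_k * 'I_r}| -> B :=
  fun t => let q := enum_val t in G q.2 (a q.1).

Lemma encode_at (A B : Type) (r k : nat) (G : 'I_r -> A -> B) (a : 'I_k -> A) i s :
  encode G a (enum_rank (i, s)) = G s (a i).
Proof. by rewrite /encode enum_rankK. Qed.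

Lemma encode_inj (A B : Type) (r k : nat) (G : 'I_r -> A -> B) :
  (forall x y, (forall s, G s x = G s y) -> x = y) ->
  injective (@encode A B r k G).
Proof.
move=> HG a b Hab.
apply functional_extensionality => i; apply: HG => s.
by rewrite -(encode_at G a) Hab encode_at.
Qed.

Lemma tjoin_l (T : Type) k l (a : 'I_k -> T) (b : 'I_l -> T) x :
  tjoin a b (lshift l x) = a x.
Proof. by rewrite /tjoin (unsplitK (inl x)). Qed.

Lemma tjoin_r (T : Type) k l (a : 'I_k -> T) (b : 'I_l -> T) x :
  tjoin a b (rshift k x) = b x.
Proof. by rewrite /tjoin (unsplitK (inr x)). Qed.

Theorem lemma3p4 (N M : structure) :
  near_linear_Zarankiewicz N ->
  locally_trace_defines N M ->
  near_linear_Zarankiewicz M.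
Proof.
move=> HN [Ecol HE] G.
have [_ [p0 _]] := dV_def G.
pose pr (x y : carrier M) : 'I_2 -> carrier M := fun i => if val i == 0 then x else y.
pose Eq2 (a : 'I_2 -> carrier M) := a (@Ordinal 2 0 isT) = a (@Ordinal 2 1 isT).
have Eq2def : definable Eq2.
  exists (FEq (Var M 0) (Var M 1)), p0 => a /=.
  by rewrite (tenv_lt _ _ (isT : 0 < 2)) (tenv_lt _ _ (isT : 1 < 2)).
have [n' [fs' [idx' [Y' [_ [_ HY']]]]]] := HE 2 Eq2 Eq2def.
have [n [fs [idx [Y [_ [Ydef HY]]]]]] := HE _ _ (dE_def G).
have [_ [pN _]] := Ydef.
pose Gf : 'I_(n' + n) -> carrier M -> carrier N := tjoin fs' fs.
have Ginj : forall x y, (forall s, Gf s x = Gf s y) -> x = y.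
  move=> x y Hxy.
  have E1 : Eq2 (pr x x) by [].
  move/HY': E1 => E1.
  have : Eq2 (pr x y); last by [].
  apply/HY'; move: E1; congr Y'; apply: functional_extensionality => j.
  rewrite /pr; case: (val (idx' j) == 0) => //.
  by have := Hxy (lshift n j); rewrite /Gf !tjoin_l.
pose KV := #|{: 'I_(dk G) * 'I_(n' + n)}|.
pose KW := #|{: 'I_(dl G) * 'I_(n' + n)}|.
pose sigma : 'I_n -> 'I_(KV + KW) := fun j =>
  match split (idx j) with
  | inl i => lshift KW (enum_rank (i, rshift n' j))
  | inr i => rshift KV (enum_rank (i, rshift n' j)) end.
have key : forall (a : 'I_(dk G) -> carrier M) (b : 'I_(dl G) -> carrier M) j,
    tjoin (encode Gf a) (encode Gf b) (sigma j) = fs j (tjoin a b (idx j)).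
  move=> a b j; rewrite /sigma {2}/tjoin.
  case: (split (idx j)) => i.
    by rewrite tjoin_l encode_at /Gf tjoin_r.
  by rewrite tjoin_r encode_at /Gf tjoin_r.
have Tdef : forall k, definable (fun _ : 'I_k -> carrier N => True).
  by move=> k; exists (FNot (FFalse N)), pN => a /=; split => // _ [].
pose G' := @DefBGraph N KV KW (fun _ => True) (fun _ => True)
  (fun z => Y (fun j => z (sigma j))) (Tdef _) (Tdef _)
  (definable_comp sigma Ydef) (fun _ _ _ => conj I I).
move=> m eps Heps.
have [lam [Hlam Hb]] := HN G' m eps Heps.
exists lam; split => // V W E HVW HK.
apply: Hb => //.
move: HVW => [f [g [fi [gi [fV [gW fE]]]]]].
exists (fun v => encode Gf (f v)), (fun w => encode Gf (g w)).
split; first by move=> x y /(encode_inj Ginj) /fi.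
split; first by move=> x y /(encode_inj Ginj) /gi.
do 2 split => //.
move=> v w; rewrite fE HY /=.
have -> : (fun j => tjoin (encode Gf (f v)) (encode Gf (g w)) (sigma j)) =
          (fun j => fs j (tjoin (f v) (g w) (idx j))).
  by apply: functional_extensionality => j; rewrite key.
by [].
Qed.
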